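(* Every tree-cograph has no induced cycle of length more than four.
   Context: Tree-cographs are defined recursively: (1) every tree is a tree-cograph; (2) if $G$ is a tree-cograph then its complement $\bar G$ is a tree-cograph; (3) for $k\ge 2$, if $G_1,\dots,G_k$ are connected tree-cographs then their disjoint union is a tree-cograph. *)

(* Defs.v *)
From mathcomp Require Import all_boot.
Set Implicit Arguments. Unset Strict Implicit. Unset Printing Implicit Defensive.

(* A graph: a finite vertex type with an adjacency relation.  Simplicity
   (symmetry / irreflexivity) is imposed where needed (trees); complement and
   disjoint union preserve it. *)
Record graph := Graph { vert :> finType; adj : rel vert }.

Definition symmetric_graph (G : graph) := forall x y : G, adj x y = adj y x.
Definition irreflexive_graph (G : graph) := forall x : G, ~~ adj x x.
Definition simple_graph (G : graph) := symmetric_graph G /\ irreflexive_graph G.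

Definition connected_graph (G : graph) :=
  0 < #|G| /\ forall x y : G, connect (@adj G) x y.

Definition is_cycle (G : graph) (s : seq G) :=
  [/\ 3 <= size s, uniq s & cycle (@adj G) s].

Definition acyclic (G : graph) := forall s : seq G, ~ is_cycle s.

Definition is_tree (G : graph) := [/\ simple_graph G, connected_graph G & acyclic G].

Definition induced_cycle (G : graph) (s : seq G) :=
  is_cycle s /\
  forall x y, x \in s -> y \in s -> adj x y ->
    y = next s x \/ x = next s y.

Definition complement (G : graph) : graph :=
  @Graph G (fun x y => (x != y) && ~~ adj x y).

Definition union_adj k (F : 'I_k -> graph) : rel {i : 'I_k & vert (F i)} :=
  fun u v => (tag u == tag v) && adj (tagged u) (tagged_as u v).

Definition disj_union k (F : 'I_k -> graph) : graph :=
  @Graph {i : 'I_k & vert (F i)} (@union_adj k F).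

(* Tree-cographs, defined recursively (up to graph isomorphism, since the
   paper's graphs are considered up to isomorphism). *)
Inductive tree_cograph : graph -> Prop :=
| tc_tree G : is_tree G -> tree_cograph G
| tc_compl G : tree_cograph G -> tree_cograph (complement G)
| tc_union k (F : 'I_k -> graph) :
    2 <= k ->
    (forall i, connected_graph (F i)) ->
    (forall i, tree_cograph (F i)) ->
    tree_cograph (disj_union F)
| tc_iso (G H : graph) (f : G -> H) :
    bijective f -> (forall x y, adj (f x) (f y) = adj x y) ->
    tree_cograph G -> tree_cograph H.

(* Main.v *)
Require Import Defs.
From mathcomp Require Import all_boot.
From mathcomp Require Import zify.
Set Implicit Arguments. Unset Strict Implicit. Unset Printing Implicit Defensive.

Definition cadj n i j := (j == i.+1 %% n) || (i == j.+1 %% n).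

Lemma modS n i : i < n -> i.+1 %% n = if i.+1 == n then 0 else i.+1.
Proof. move=> H; case: eqP => [->|ne]; first by rewrite modnn. by rewrite modn_small; lia. Qed.

Lemma cadjE n i j : i < n -> j < n -> cadj n i j =
  [|| (j == i.+1), (i.+1 == n) && (j == 0), (i == j.+1) | (j.+1 == n) && (i == 0)].
Proof. move=> Hi Hj; rewrite /cadj !modS //.
case: ifP => /eqP H1; case: ifP => /eqP H2; apply/idP/idP; move=> H; lia. Qed.

Lemma cadj_ii n i : 5 <= n -> i < n -> cadj n i i = false.
Proof. move=> H H2; rewrite cadjE //; apply/negbTE; lia. Qed.

Definition holeR (T : eqType) (e : rel T) (s : seq T) :=
  [/\ uniq s, 5 <= size s &
   forall x0 i j, i < size s -> j < size s ->
     e (nth x0 s i) (nth x0 s j) = cadj (size s) i j].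

Definition antiholeR (T : eqType) (e : rel T) (s : seq T) :=
  [/\ uniq s, 5 <= size s &
   forall x0 i j, i < size s -> j < size s ->
     e (nth x0 s i) (nth x0 s j) = (i != j) && ~~ cadj (size s) i j].

Definition good (G : graph) :=
  [/\ simple_graph G, forall s : seq G, ~ holeR (@adj G) s
                    & forall s : seq G, ~ antiholeR (@adj G) s].

Lemma next_nth_uniq (T : eqType) (s : seq T) x0 i :
  uniq s -> i < size s -> next s (nth x0 s i) = nth x0 s (i.+1 %% size s).
Proof.
move=> U Hi; rewrite next_nth mem_nth //.
case: s U Hi => [//|y p] U Hi.
rewrite index_uniq // modS //.
case: eqP => [E|NE].
  by rewrite nth_default //; move: E => /= E; lia.
by rewrite /= (set_nth_default x0) //; move: Hi NE => /= Hi NE; lia.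
Qed.

Lemma compl_hole (G : graph) (s : seq G) :
  irreflexive_graph G -> holeR (@adj (complement G)) s -> antiholeR (@adj G) s.
Proof.
move=> Irr [U S H]; split=> // x0 i j Hi Hj.
have := H x0 i j Hi Hj; rewrite /= nth_uniq //.
case: (eqVneq i j) => [->|ne] /=.
  by rewrite (negbTE (Irr _)).
by case: adj; case: cadj.
Qed.

Lemma compl_antihole (G : graph) (s : seq G) :
  irreflexive_graph G -> antiholeR (@adj (complement G)) s -> holeR (@adj G) s.
Proof.
move=> Irr [U S H]; split=> // x0 i j Hi Hj.
have := H x0 i j Hi Hj; rewrite /= nth_uniq //.
case: (eqVneq i j) => [->|ne] /=.
  by rewrite (negbTE (Irr _)) cadj_ii.
by case: adj; case: cadj.
Qed.

Lemma good_compl G : good G -> good (complement G).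
Proof.
move=> [[Sy Irr] Hh Ha]; split.
- split=> [x y|x] /=; last by rewrite eqxx.
  by rewrite eq_sym Sy.
- by move=> s /(compl_hole Irr); apply: Ha.
- by move=> s /(compl_antihole Irr); apply: Hh.
Qed.

Lemma nth_in (T : eqType) (s : seq T) x :
  x \in s -> exists2 i, i < size s & x = nth x s i.
Proof. by move=> Hx; exists (index x s); rewrite ?index_mem ?nth_index. Qed.

Lemma hole_cycle (T : eqType) (e : rel T) s : holeR e s -> cycle e s.
Proof.
move=> [U S H].
apply: (@sub_in_cycle _ (mem s) (frel (next s))); last exact: cycle_next.
  move=> x y Hx _ /= /eqP <-.
  have [i Hi ->] := nth_in Hx.
  rewrite next_nth_uniq // H // ?ltn_pmod //; last by lia.
  by rewrite /cadj eqxx.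
by apply/allP.
Qed.

Lemma good_tree G : is_tree G -> good G.
Proof.
move=> [SG _ Ac]; split=> // s.
  move=> Hs; apply: (Ac s); have [U S _] := Hs; split=> //; first exact: ltnW (ltnW S).
  exact: hole_cycle Hs.
case=> U S H.
have [x0 _] : exists x0 : G, True by case: s S {U H} => // x _ _; exists x.
apply: (Ac [:: nth x0 s 0; nth x0 s 2; nth x0 s 4; nth x0 s 1; nth x0 s 3]).
split=> //.
  rewrite /= !inE !nth_uniq //; try lia.
rewrite /= !H //; try lia.
rewrite !cadjE //; try lia.
Qed.

Section Transfer.
Variables (T1 T2 : eqType) (e1 : rel T1) (e2 : rel T2) (g : T1 -> T2) (s : seq T1).
Hypothesis He : {in s &, forall x y, e1 x y = e2 (g x) (g y)}.
Hypothesis Hg : {in s &, injective g}.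

Lemma transfer_nth (P : nat -> nat -> bool) :
  (forall x0 i j, i < size s -> j < size s -> e1 (nth x0 s i) (nth x0 s j) = P i j) ->
  forall x0 i j, i < size (map g s) -> j < size (map g s) ->
    e2 (nth x0 (map g s) i) (nth x0 (map g s) j) = P i j.
Proof.
move=> H x0 i j; rewrite size_map => Hi Hj.
case: s He Hg H Hi Hj => [//|y0 s'] He' Hg' H Hi Hj.
by rewrite !(nth_map y0) // -He' ?mem_nth // H.
Qed.

Lemma transfer_hole : holeR e1 s -> holeR e2 (map g s).
Proof.
case=> U S H; split; rewrite ?map_inj_in_uniq ?size_map //.
by move: (transfer_nth H); rewrite size_map.
Qed.

Lemma transfer_antihole : antiholeR e1 s -> antiholeR e2 (map g s).
Proof.
case=> U S H; split; rewrite ?map_inj_in_uniq ?size_map //.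
by move: (transfer_nth H); rewrite size_map.
Qed.
End Transfer.

Lemma good_iso (G H : graph) (f : G -> H) :
  bijective f -> (forall x y, adj (f x) (f y) = adj x y) -> good G -> good H.
Proof.
move=> [g fg gf] Hf [[Sy Irr] Hh Ha].
have He : forall x y : H, adj x y = adj (g x) (g y).
  by move=> x y; rewrite -Hf !gf.
split.
- split=> [x y|x]; first by rewrite !He Sy.
  by rewrite He Irr.
- move=> s /(transfer_hole (e2 := @adj G) (g := g)) Hs; apply: (Hh (map g s)); apply: Hs.
    by move=> x y _ _; apply: He.
  by move=> x y _ _ E; rewrite -(gf x) -(gf y) E.
- move=> s /(transfer_antihole (e2 := @adj G) (g := g)) Hs; apply: (Ha (map g s)); apply: Hs.
    by move=> x y _ _; apply: He.
  by move=> x y _ _ E; rewrite -(gf x) -(gf y) E.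
Qed.

Section Union.
Variables (k : nat) (F : 'I_k -> graph).
Let U := disj_union F.

Lemma uadj_tag (u v : U) : adj u v -> tag u = tag v.
Proof. by case/andP => /eqP. Qed.

Lemma uadj_same (u0 v w : U) : tag v = tag u0 -> tag w = tag u0 ->
  adj v w = adj (tagged_as u0 v) (tagged_as u0 w).
Proof.
case: u0 => i0 x0; case: v => i x; case: w => j y /= Ei Ej.
subst i j; by rewrite /= /union_adj /= eqxx !tagged_asE.
Qed.

Lemma uinj (u0 v : U) : tag v = tag u0 ->
  v = @Tagged _ (tag u0) (fun i => vert (F i)) (tagged_as u0 v).
Proof. by case: u0 => i0 x0; case: v => i x /= E; subst i; rewrite tagged_asE. Qed.

Lemma good_union : (forall i, good (F i)) -> good U.
Proof.
move=> Hg.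
have Sy : symmetric_graph U.
  case=> i x; case=> j y; rewrite /= /union_adj /=.
  case: (eqVneq i j) => [E|ne]; first subst j.
    by rewrite ?eqxx !tagged_asE; case: (Hg i) => [[S _] _ _]; apply: S.
  by [].
have Ir : irreflexive_graph U.
  case=> i x; rewrite /= /union_adj /= eqxx tagged_asE.
  by case: (Hg i) => [[_ I] _ _]; apply: I.
have proj : forall (s : seq U) (u0 : U), (forall v, v \in s -> tag v = tag u0) ->
   {in s &, forall x y : U, @adj U x y = @adj (F (tag u0)) (tagged_as u0 x) (tagged_as u0 y)} /\
   {in s &, injective (tagged_as u0)}.
  move=> s u0 Ht; split.
    by move=> x y Hx Hy; apply: uadj_same; apply: Ht.
  by move=> x y Hx Hy E; rewrite (uinj (Ht _ Hx)) (uinj (Ht _ Hy)) E.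
split=> //.
- move=> s Hs; have [Us S H] := Hs.
  have [x0 _] : exists x0 : U, True by case: s S {Us H Hs} => // x _ _; exists x.
  have Ht : forall i, i < size s -> tag (nth x0 s i) = tag (nth x0 s 0).
    elim=> [//|i IH] Hi; rewrite -IH; last exact: ltnW.
    apply/esym/uadj_tag; rewrite H // ?cadjE ?eqxx //; exact: ltnW.
  set u0 := nth x0 s 0.
  have Ht' : forall v, v \in s -> tag v = tag u0.
    move=> v /nth_in [i Hi ->]; rewrite (set_nth_default x0) //; exact: Ht.
  have [He Hin] := proj s u0 Ht'.
  case: (Hg (tag u0)) => _ Hh _; apply: (Hh (map (tagged_as u0) s)).
  exact: transfer_hole He Hin Hs.
- move=> s Hs; have [Us S H] := Hs.
  have [x0 _] : exists x0 : U, True by case: s S {Us H Hs} => // x _ _; exists x.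
  have A : forall i j, i < size s -> j < size s -> i != j -> ~~ cadj (size s) i j ->
     tag (nth x0 s i) = tag (nth x0 s j).
    by move=> i j Hi Hj ne nc; apply: uadj_tag; rewrite H // ne nc.
  have Ht : forall i, i < size s -> tag (nth x0 s i) = tag (nth x0 s 0).
    move=> i Hi; move: (size s) S Hi A => n S Hi A.
    case: (eqVneq i 0) => [->//|i0].
    case: (eqVneq i 1) => [->|i1].
      by rewrite (A 1 3) ?(A 3 0) // ?cadjE //; lia.
    case: (eqVneq i n.-1) => [->|in1].
      by rewrite (A _ 2) ?(A 2 0) // ?cadjE //; lia.
    by apply: A => //; rewrite ?cadjE //; lia.
  set u0 := nth x0 s 0.
  have Ht' : forall v, v \in s -> tag v = tag u0.
    move=> v /nth_in [i Hi ->]; rewrite (set_nth_default x0) //; exact: Ht.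
  have [He Hin] := proj s u0 Ht'.
  case: (Hg (tag u0)) => _ _ Ha; apply: (Ha (map (tagged_as u0) s)).
  exact: transfer_antihole He Hin Hs.
Qed.
End Union.

Lemma induced_hole (G : graph) (s : seq G) :
  simple_graph G -> induced_cycle s -> 4 < size s -> holeR (@adj G) s.
Proof.
move=> [Sy Ir] [[S3 U C] Ch] H5.
have n0 : 0 < size s := leq_ltn_trans (leq0n 4) H5.
split=> // x0 i j Hi Hj.
apply/idP/idP.
  move=> A; have := Ch _ _ (mem_nth x0 Hi) (mem_nth x0 Hj) A.
  rewrite !next_nth_uniq //.
  case=> /eqP; rewrite nth_uniq ?ltn_pmod // => E; by rewrite /cadj E ?orbT.
rewrite /cadj => /orP [/eqP ->| /eqP ->]; rewrite -next_nth_uniq //.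
  by apply: next_cycle C _; apply: mem_nth.
by rewrite Sy; apply: next_cycle C _; apply: mem_nth.
Qed.

Lemma tc_good G : tree_cograph G -> good G.
Proof.
elim=> {G}.
- by move=> G; apply: good_tree.
- by move=> G _; apply: good_compl.
- by move=> k F _ _ _ IH; apply: good_union.
- by move=> G H f bf Hf _ IH; apply: good_iso bf Hf IH.
Qed.

Theorem lemma1 (G : graph) (s : seq G) :
  tree_cograph G -> induced_cycle s -> size s <= 4.
Proof.
move=> /tc_good [SG Hh _] Ic.
rewrite leqNgt; apply/negP => H5.
exact: (Hh s (induced_hole SG Ic H5)).
Qed.
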